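(* Let $n \ge 1$ be such that $SP_n$ is tree-complete and $n+1$ is prime. Then $SP_{n+1}$ and $SP_{n+2}$ are tree-complete. Further, if $n+1$ and $n+3$ are both prime, then $SP_{n+1}, SP_{n+2}, SP_{n+3}, SP_{n+4}, SP_{n+5}$ are all tree-complete.
   Context: For $n \ge 1$, the super prime graph $SP_n$ is the graph with node set $\{1,2,\dots,n\}$ in which two distinct nodes $u, v$ are adjacent if and only if $\gcd(u,v) = 1$. A graph $G$ of order $n$ is tree-complete if every tree of order $n$ is isomorphic to a subgraph of $G$. *)

(* Defs.v *)
From mathcomp Require Import all_boot all_order.
Set Implicit Arguments. Unset Strict Implicit. Unset Printing Implicit Defensive.

Definition simple_graph n (e : rel 'I_n) : Prop :=
  irreflexive e /\ symmetric e.

Definition n_edges n (e : rel 'I_n) : nat :=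
  #|[set p : 'I_n * 'I_n | e p.1 p.2 && (val p.1 < val p.2)]|.

Definition is_tree n (e : rel 'I_n) : Prop :=
  simple_graph e /\ (forall x y : 'I_n, connect e x y) /\ n_edges e = n.-1.

Definition subgraph_embeds n (T G : rel 'I_n) : Prop :=
  exists f : 'I_n -> 'I_n, injective f /\ forall x y, T x y -> G (f x) (f y).

Definition tree_complete n (G : rel 'I_n) : Prop :=
  forall T : rel 'I_n, is_tree T -> subgraph_embeds T G.

(* Super prime graph SP_n: vertex i : 'I_n represents the integer i+1;
   distinct vertices adjacent iff coprime. *)
Definition SP n : rel 'I_n :=
  fun i j => (i != j) && coprime i.+1 j.+1.
Arguments SP n : clear implicits.

(* Main.v *)
Require Import Defs.
From mathcomp Require Import all_boot all_order.
From mathcomp Require Import zify.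
Set Implicit Arguments. Unset Strict Implicit. Unset Printing Implicit Defensive.

Lemma card_sumb (V : finType) (A : {set V}) (P : pred V) :
  \sum_(x in A) (P x : nat) = #|[set x in A | P x]|.
Proof.
rewrite -sum1_card big_mkcond [RHS]big_mkcond /=.
apply: eq_bigr => x _; rewrite !inE; by case: (x \in A); case: (P x).
Qed.

Definition adjS (V : finType) (r : rel V) (S : {set V}) : rel V :=
  fun x y => [&& x \in S, y \in S & r x y].
Definition nbrs (V : finType) (r : rel V) (S : {set V}) (x : V) : {set V} :=
  [set y in S | r x y].
Definition deg (V : finType) (r : rel V) (S : {set V}) (x : V) : nat :=
  #|nbrs r S x|.
Definition esum (V : finType) (r : rel V) (S : {set V}) : nat :=
  \sum_(x in S) deg r S x.
Definition conn (V : finType) (r : rel V) (S : {set V}) : Prop :=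
  forall x y, x \in S -> y \in S -> connect (adjS r S) x y.
Definition stree (V : finType) (r : rel V) (S : {set V}) : Prop :=
  [/\ symmetric r, irreflexive r, conn r S & esum r S = 2 * (#|S| - 1)].

Lemma connect_closedP (V : finType) (e : rel V) (P : pred V) a b :
  (forall u w, P u -> e u w -> P w) -> P a -> connect e a b -> P b.
Proof.
move=> cl Pa /connectP [p pth ->]; elim: p a Pa pth => [|c p IH] a Pa //=.
case/andP=> eac pth; apply: IH pth; exact: cl eac.
Qed.

Lemma connect_homo (V W : finType) (e1 : rel V) (e2 : rel W) (h : V -> W) a b :
  (forall u w, e1 u w -> e2 (h u) (h w)) -> connect e1 a b -> connect e2 (h a) (h b).
Proof.
move=> hh /connectP [p pth ->]; elim: p a pth => [|c p IH] a //=.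
case/andP=> eac pth; apply: connect_trans (connect1 (hh _ _ eac)) (IH _ pth).
Qed.

Lemma connect_homo_in (V W : finType) (e1 : rel V) (e2 : rel W) (h : V -> W) (P : pred V) a b :
  (forall u w, P u -> e1 u w -> P w /\ e2 (h u) (h w)) -> P a -> connect e1 a b -> connect e2 (h a) (h b).
Proof.
move=> hh Pa /connectP [p pth ->]; elim: p a Pa pth => [|c p IH] a Pa //=.
case/andP=> eac pth; have [Pc e2ac] := hh _ _ Pa eac.
apply: connect_trans (connect1 e2ac) (IH _ Pc pth).
Qed.

Lemma leaf_uniq (V : finType) (r : rel V) S y a b :
  deg r S y = 1 -> a \in S -> b \in S -> r y a -> r y b -> a = b.
Proof.
move=> /eqP/cards1P [z hz] aS bS ya yb.
have : a \in nbrs r S y by rewrite inE aS ya.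
have : b \in nbrs r S y by rewrite inE bS yb.
by rewrite /deg hz !inE => /eqP -> /eqP ->.
Qed.

Lemma deg_ge1 (V : finType) (r : rel V) S x :
  stree r S -> 2 <= #|S| -> x \in S -> 0 < deg r S x.
Proof.
case=> sy ir cn _ hS xS.
have : 0 < #|S :\ x| by move: hS; rewrite (cardsD1 x S) xS; lia.
case/card_gt0P=> w; rewrite !inE => /andP [wx wS].
have := cn x w xS wS; case/connectP => p pth lst.
case: p pth lst => [|c p] /=; first by move=> _ e; rewrite e eqxx in wx.
case/andP=> /and3P [_ cS xc] _ _.
apply/card_gt0P; exists c; by rewrite inE cS xc.
Qed.

Lemma leaf_exists (V : finType) (r : rel V) S v :
  stree r S -> 2 <= #|S| -> v \in S -> exists l, [/\ l \in S, l != v & deg r S l = 1].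
Proof.
move=> st hS vS.
case: (boolP [exists l in S :\ v, deg r S l == 1]).
  case/existsP=> l; rewrite !inE => /andP [/andP [lv lS] /eqP dl]; by exists l.
move=> /existsPn H.
have ge2 : forall l, l \in S :\ v -> 2 <= deg r S l.
  move=> l lS; have := H l; rewrite lS /= => dl.
  have : 0 < deg r S l by apply: deg_ge1 st hS _; move: lS; rewrite inE => /andP[].
  move: dl; lia.
have := st; case=> _ _ _ es.
have : \sum_(x in S :\ v) 2 <= \sum_(x in S :\ v) deg r S x by apply: leq_sum => x /ge2.
rewrite sum_nat_const.
move: es; rewrite /esum (big_setD1 v vS) /=.
have := deg_ge1 st hS vS.
have := cardsD1 v S; rewrite vS.
lia.
Qed.

Lemma nbrsD1 (V : finType) (r : rel V) S l u :
  nbrs r (S :\ l) u = nbrs r S u :\ l.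
Proof. by apply/setP=> y; rewrite !inE; case: (y == l); case: (y \in S). Qed.

Lemma degD1 (V : finType) (r : rel V) S l u :
  deg r S u = deg r (S :\ l) u + ((l \in S) && r u l).
Proof.
rewrite /deg nbrsD1 (cardsD1 l (nbrs r S u)) !inE; lia.
Qed.

Lemma leaf_remove (V : finType) (r : rel V) S l :
  stree r S -> l \in S -> deg r S l = 1 -> stree r (S :\ l).
Proof.
move=> st lS dl; have := st; case=> sy ir cn es.
split => //.
- move=> a b; rewrite !inE => /andP [al aS] /andP [bl bS].
  have := cn a b aS bS; case/connectP => p.
  elim: {p}(size p).+1 {-2}p a al aS (ltnSn (size p)) => // k IH [|c p] a al aS szp /=.
    by move=> _ ->; apply: connect0.
  case/andP=> /and3P [_ cS ac] pth lst.
  case: (eqVneq c l) => cl.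
    subst c.
    case: p szp pth lst => [|d p] szp /=; first by move=> _ e; rewrite e eqxx in bl.
    case/andP=> /and3P [_ dS ld] pth lst.
    have ad : a = d by apply: (leaf_uniq dl) => //; rewrite sy.
    subst d; apply: (IH p a al aS) => //; move: szp => /=; lia.
  apply: connect_trans (connect1 _) (IH p c cl cS _ pth lst).
    by rewrite /adjS !inE al aS cl cS ac.
  by move: szp => /=; lia.
- have e1 : \sum_(x in S :\ l) deg r S x = esum r (S :\ l) + 1.
    rewrite /esum (eq_bigr (fun x => deg r (S :\ l) x + ((l \in S) && r x l))); last first.
      by move=> x _; apply: degD1.
    rewrite big_split /= (@card_sumb V (S :\ l) (fun x => (l \in S) && r x l)); congr (_ + _).
    rewrite -dl /deg; apply: eq_card => y; rewrite !inE lS /= sy.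
    by case: (eqVneq y l) => [->|_]; rewrite ?ir ?andbF.
  move: es; rewrite /esum (big_setD1 l lS) /= e1 dl /esum.
  have := cardsD1 l S; rewrite lS.
  have : 0 < #|S :\ l|.
    have : 0 < deg r S l by rewrite dl.
    case/card_gt0P => x; rewrite inE => /andP [xS lx].
    apply/card_gt0P; exists x; rewrite !inE xS andbT; apply/eqP => e; by rewrite e ir in lx.
  lia.
Qed.

Definition addleaf (V : finType) (r : rel V) (l z : V) : rel V :=
  fun a b => if a == l then b == z else if b == l then a == z else r a b.

Lemma addleaf_eq (V : finType) (r : rel V) l z a b :
  a != l -> b != l -> addleaf r l z a b = r a b.
Proof. by move=> al bl; rewrite /addleaf (negbTE al) (negbTE bl). Qed.

Lemma leaf_add (V : finType) (r : rel V) S l z :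
  stree r S -> l \notin S -> z \in S -> stree (addleaf r l z) (l |: S).
Proof.
case=> sy ir cn es lS zS.
have zl : z != l by apply: contraNneq lS => <-.
have inl x : x \in S -> x != l by move=> xS; apply: contraNneq lS => <-.
split.
- move=> a b; rewrite /addleaf.
  have [al|al] := eqVneq a l; have [bl|bl] := eqVneq b l.
  + by subst.
  + by subst; rewrite eq_sym.
  + by subst; rewrite eq_sym.
  + exact: sy.
- move=> a; rewrite /addleaf; have [al|al] := eqVneq a l; first by subst; rewrite eq_sym (negbTE zl).
  exact: ir.
- have sub : forall x y, x \in S -> y \in S -> connect (adjS (addleaf r l z) (l |: S)) x y.
    move=> x y xS yS; have := cn x y xS yS.
    apply: (connect_homo_in (P := fun u => u \in S) (h := id)) => // u w uS.
    case/and3P=> _ wS uw; split => //.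
    by rewrite /adjS !inE uS wS !orbT addleaf_eq ?inl.
  have lz : connect (adjS (addleaf r l z) (l |: S)) l z.
    by apply: connect1; rewrite /adjS !inE eqxx zS orbT /addleaf eqxx eqxx.
  have zl' : connect (adjS (addleaf r l z) (l |: S)) z l.
    by apply: connect1; rewrite /adjS !inE eqxx zS orbT /addleaf (negbTE zl) !eqxx.
  move=> a b; rewrite !inE => /orP [/eqP ->|aS] /orP [/eqP ->|bS].
  + exact: connect0.
  + exact: connect_trans lz (sub _ _ zS bS).
  + exact: connect_trans (sub _ _ aS zS) zl'.
  + exact: sub.
- rewrite /esum (big_setU1 _ lS) /=.
  have dl : deg (addleaf r l z) (l |: S) l = 1.
    rewrite /deg (_ : nbrs _ _ _ = [set z]) ?cards1 //; apply/setP=> y.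
    rewrite !inE /addleaf eqxx; case: (eqVneq y z) => [->|]; by rewrite ?zS ?orbT ?andbF.
  have dx x : x \in S -> deg (addleaf r l z) (l |: S) x = deg r S x + (x == z).
    move=> xS; rewrite (degD1 _ _ l) setU1K // setU11 /= /addleaf eqxx (negbTE (inl x xS)).
    congr (_ + _); rewrite /deg; apply: eq_card => y; rewrite !inE.
    case: (eqVneq y l) => [->|yl]; first by rewrite (negbTE lS).
    by rewrite (negbTE (inl x xS)).
  rewrite dl (eq_bigr _ dx) big_split /= (@card_sumb V S (fun x => x == z)).
  have -> : [set x in S | x == z] = [set z].
    by apply/setP=> y; rewrite !inE; case: (eqVneq y z) => [->|]; rewrite ?zS ?andbF.
  rewrite cards1; move: es; rewrite /esum => ->.
  rewrite cardsU1 lS.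
  have : 0 < #|S| by apply/card_gt0P; exists z.
  lia.
Qed.

Lemma stree_set0 (V : finType) (r : rel V) :
  symmetric r -> irreflexive r -> stree r set0.
Proof.
move=> sy ir; split=> //; first by move=> x y; rewrite inE.
by rewrite /esum big_set0 cards0.
Qed.

Lemma stree_set1 (V : finType) (r : rel V) l :
  symmetric r -> irreflexive r -> stree r [set l].
Proof.
move=> sy ir; split=> //.
  by move=> x y; rewrite !inE => /eqP -> /eqP ->; apply: connect0.
rewrite /esum big_set1 cards1 /deg (_ : nbrs _ _ _ = set0) ?cards0 //.
by apply/setP=> y; rewrite !inE; case: (eqVneq y l) => [->|]; rewrite ?ir.
Qed.

Lemma forest1 (V : finType) k : forall (r : rel V) (S : {set V}), #|S| < k -> stree r S ->
  forall v, v \in S -> exists r', stree r' (S :\ v) /\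
   (forall a b, a \in S :\ v -> b \in S :\ v -> r a b -> r' a b).
Proof.
elim: k => // k IH r S hk st v vS.
have := st; case=> sy ir cn es.
case: (leqP #|S| 1) => hS.
  exists r; split => //.
  have -> : S :\ v = set0.
    apply/eqP; rewrite -cards_eq0; have := cardsD1 v S; rewrite vS; lia.
  exact: stree_set0.
have [l [lS lv dl]] := leaf_exists st hS vS.
have : 0 < deg r S l by rewrite dl.
case/card_gt0P => x; rewrite inE => /andP [xS lx].
have st1 := leaf_remove st lS dl.
have vS1 : v \in S :\ l by rewrite !inE eq_sym lv.
have hk1 : #|S :\ l| < k by have := cardsD1 l S; rewrite lS; lia.
have [r1 [st1' sub1]] := IH r (S :\ l) hk1 st1 v vS1.
have eqS : S :\ v = l |: (S :\ l :\ v).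
  apply/setP=> y; rewrite !inE; case: (eqVneq y l) => [->|]; by rewrite ?lv ?lS ?andbT.
have lnS : l \notin S :\ l :\ v by rewrite !inE eqxx andbF.
have uniqx : forall b, b \in S -> r l b -> b = x by move=> b bS lb; apply: (leaf_uniq dl).
case: (set_0Vmem (S :\ l :\ v)) => [E|[w wS]].
  exists r; split=> //.
    rewrite eqS E setU0; exact: stree_set1.
set z := if x != v then x else w.
have zS : z \in S :\ l :\ v.
  rewrite /z; case: (eqVneq x v) => // xv.
  rewrite !inE xv xS andbT; apply/eqP => e; by rewrite e ir in lx.
exists (addleaf r1 l z); split; first by rewrite eqS; exact: leaf_add.
move=> a b; rewrite eqS !inE => /orP [/eqP al|aS] /orP [/eqP bl|bS] rab.
- by subst; rewrite ir in rab.
- subst a; case/and3P: bS => bv bl bS.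
  have bx : b = x by apply: uniqx.
  move: bv; rewrite bx => xv.
  by rewrite /addleaf eqxx /z xv eqxx.
- subst b; case/and3P: aS => av al aS.
  have ax : a = x by apply: uniqx; rewrite // sy.
  move: av al; rewrite ax => xv xl.
  by rewrite /addleaf (negbTE xl) eqxx /z xv eqxx.
- case/and3P: aS => av al aS; case/and3P: bS => bv bl bS.
  rewrite addleaf_eq //; apply: sub1 => //; by rewrite !inE ?av ?al ?aS ?bv ?bl ?bS.
Qed.

Lemma forestR (V : finType) (r : rel V) (S : {set V}) : stree r S -> forall R : {set V},
  exists r', stree r' (S :\: R) /\
   (forall a b, a \in S :\: R -> b \in S :\: R -> r a b -> r' a b).
Proof.
move=> st R; elim: {R}#|R| {-2}R (erefl #|R|) => [|k IH] R hR.
  have : #|R| == 0 by rewrite -hR.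
  rewrite cards_eq0 => /eqP ->; rewrite setD0; by exists r.
have : 0 < #|R| by rewrite hR.
case/card_gt0P => v vR.
have hR' : #|R :\ v| = k by have := cardsD1 v R; rewrite vR; lia.
have [r1 [st1 sub1]] := IH _ hR'.
case: (boolP (v \in S :\: (R :\ v))) => vS.
  have [r2 [st2 sub2]] := forest1 (ltnSn _) st1 vS.
  have eq : S :\: (R :\ v) :\ v = S :\: R.
    apply/setP=> y; rewrite !inE; case: (eqVneq y v) => [->|]; by rewrite ?vR ?andbF.
  exists r2; rewrite -eq; split=> // a b aS bS rab; apply: sub2 => //; apply: sub1 => //.
    by move: aS; rewrite !inE => /andP [_ ->].
    by move: bS; rewrite !inE => /andP [_ ->].
have eq : S :\: (R :\ v) = S :\: R.
  apply/setP=> y; rewrite !inE; case: (eqVneq y v) => [e|]; last by [].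
  by subst; move: vS; rewrite !inE eqxx /= vR; case: (v \in S).
by exists r1; rewrite -eq.
Qed.

Lemma dichot (V : finType) (r : rel V) (S : {set V}) : stree r S -> 3 <= #|S| ->
  exists y x, [/\ y \in S, x \in S, deg r S y = 1, r y x &
     (deg r S x = 2 \/ exists y', [/\ y' \in S, y' != y, deg r S y' = 1 & r y' x])].
Proof.
move=> st hS; have := st; case=> sy ir cn es.
case: (boolP [exists y in S, exists x in S, (deg r S y == 1) && r y x &&
    ((deg r S x == 2) || [exists y' in S, (y' != y) && (deg r S y' == 1) && r y' x])]).
  case/existsP=> y /andP [yS /existsP [x /andP [xS /andP [/andP [/eqP dy yx] H]]]].
  exists y, x; split=> //; case/orP: H => [/eqP ->|/existsP [y' /andP [y'S /andP [/andP [y'y /eqP dy'] y'x]]]].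
    by left.
  by right; exists y'.
move/existsPn => H.
have Hn : forall y x, y \in S -> x \in S -> deg r S y = 1 -> r y x ->
    deg r S x != 2 /\ (forall y', y' \in S -> y' != y -> deg r S y' = 1 -> ~~ r y' x).
  move=> y x yS xS dy yx; have := H y; rewrite yS /= => /existsPn /(_ x).
  rewrite xS dy yx eqxx /= negb_or => /andP [d2 /existsPn Hy']; split=> // y' y'S y'y dy'.
  by have := Hy' y'; rewrite y'S y'y dy' eqxx.
have hS2 : 2 <= #|S| by lia.
set L := [set y in S | deg r S y == 1].
set nb := fun y => odflt y [pick x in nbrs r S y].
have nbP : forall y, y \in L -> nb y \in nbrs r S y.
  move=> y; rewrite inE => /andP [yS /eqP dy]; rewrite /nb; case: pickP => [x xn //|none].
  have : 0 < deg r S y by rewrite dy.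
  case/card_gt0P => x xn. have := none x. rewrite /= xn. done.
have LS : forall y, y \in L -> y \in S by move=> y; rewrite inE => /andP [].
have nbS : forall y, y \in L -> nb y \in S by move=> y /nbP; rewrite inE => /andP [].
have nbr : forall y, y \in L -> r y (nb y) by move=> y /nbP; rewrite inE => /andP [].
have nbL : forall y, y \in L -> nb y \notin L.
  move=> y yL; apply/negP => xL.
  have yS := LS _ yL; have xS := nbS _ yL; have yx := nbr _ yL.
  have dy : deg r S y = 1 by move: yL; rewrite inE => /andP [_ /eqP].
  have dx : deg r S (nb y) = 1 by move: xL; rewrite inE => /andP [_ /eqP].
  have cl : forall u w, u \in [set y; nb y] -> adjS r S u w -> w \in [set y; nb y].
    move=> u w; rewrite !inE => /orP [/eqP ->|/eqP ->] /and3P [_ wS uw].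
      by rewrite (leaf_uniq dy wS xS uw yx) eqxx orbT.
    by rewrite (leaf_uniq dx wS yS uw) ?eqxx // sy.
  have : S \subset [set y; nb y].
    apply/subsetP => z zS; apply: (connect_closedP (P := fun u => u \in [set y; nb y]) cl _ (cn _ _ yS zS)).
    by rewrite !inE eqxx.
  move/subset_leq_card; rewrite cards2; lia.
have nbinj : {in L &, injective nb}.
  move=> y1 y2 y1L y2L e; apply/eqP; apply: contraT => y12.
  have y1S := LS _ y1L; have y2S := LS _ y2L.
  have dy1 : deg r S y1 = 1 by move: y1L; rewrite inE => /andP [_ /eqP].
  have dy2 : deg r S y2 = 1 by move: y2L; rewrite inE => /andP [_ /eqP].
  have [_ H2] := Hn y1 (nb y1) y1S (nbS _ y1L) dy1 (nbr _ y1L).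
  have y21 : y2 != y1 by rewrite eq_sym.
  by have := H2 y2 y2S y21 dy2; rewrite e nbr.
set I := nb @: L.
have IS : forall u, u \in I -> u \in S by move=> u /imsetP [y yL ->]; apply: nbS.
have ineq : forall u, u \in S -> 2 + (u \in I) <= deg r S u + (u \in L).
  move=> u uS; have d1 := deg_ge1 st hS2 uS.
  case: (boolP (u \in L)) => uL.
    have uI : u \notin I by apply/imsetP => [[y yL e]]; move: (nbL _ yL); rewrite -e uL.
    move: uL; rewrite inE uS /= => /eqP ->; by rewrite (negbTE uI).
  have du1 : deg r S u != 1 by move: uL; rewrite inE uS.
  case: (boolP (u \in I)) => uI.
    case/imsetP: uI => y yL e.
    have dy : deg r S y = 1 by move: yL; rewrite inE => /andP [_ /eqP].
    have yu : r y u by rewrite e; apply: nbr.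
    have [d2 _] := Hn y u (LS _ yL) uS dy yu.
    move: d1 du1 d2; lia.
  move: d1 du1; lia.
have : \sum_(u in S) (2 + (u \in I)) <= \sum_(u in S) (deg r S u + (u \in L)) by apply: leq_sum.
rewrite !big_split /= sum_nat_const (@card_sumb V S (fun u => u \in I)) (@card_sumb V S (fun u => u \in L)).
have -> : [set u in S | u \in I] = I by apply/setP => u; rewrite inE; case: (boolP (u \in I)) => [/IS ->|]; rewrite ?andbF.
have -> : [set u in S | u \in L] = L by apply/setP => u; rewrite inE; case: (boolP (u \in L)) => [/LS ->|]; rewrite ?andbF.
rewrite card_in_imset //.
move: es; rewrite /esum => ->.
lia.
Qed.

Lemma card_sumT (V : finType) (P : pred V) :
  \sum_x (P x : nat) = #|[set x | P x]|.
Proof.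
rewrite -sum1_card [RHS]big_mkcond /=; apply: eq_bigr => x _; rewrite inE; by case: (P x).
Qed.

Lemma nedges2 m (e : rel 'I_m) : symmetric e -> irreflexive e ->
  2 * n_edges e = \sum_i #|[set j | e i j]|.
Proof.
move=> sy ir.
have -> : \sum_i #|[set j | e i j]| = \sum_i \sum_j (e i j : nat).
  by apply: eq_bigr => i _; rewrite -(@card_sumT _ (e i)).
rewrite (pair_big xpredT xpredT (fun i j => (e i j : nat))) /=.
set A := [set p : 'I_m * 'I_m | e p.1 p.2 && (p.1 < p.2)].
set B := [set p : 'I_m * 'I_m | e p.1 p.2 && (p.2 < p.1)].
have -> : \sum_(p : 'I_m * 'I_m) (e p.1 p.2 : nat) = #|A :|: B|.
  rewrite (@card_sumT _ (fun p : 'I_m * 'I_m => e p.1 p.2)).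
  apply: eq_card => p.
  rewrite !inE; case: p => a b /=.
  case: (boolP (e a b)) => //= eab.
  have : a != b by apply: contraTneq eab => ->; rewrite ir.
  by move=> ab; rewrite -neq_ltn.
have -> : n_edges e = #|A| by apply: eq_card => p; rewrite !inE.
have AB : A :&: B = set0.
  apply/setP => p; rewrite !inE; case: (e p.1 p.2) => //=.
  by apply/negP => /andP [h1 h2]; have := ltn_trans h1 h2; rewrite ltnn.
rewrite cardsU AB cards0 subn0.
suff -> : B = [set (p.2, p.1) | p in A].
  rewrite card_imset; first lia.
  by case=> a b [c d] /= [-> ->].
apply/setP => p; apply/idP/imsetP.
  rewrite inE => /andP [h1 h2]; exists (p.2, p.1); last by case: p {h1 h2}.
  by rewrite inE /= sy h1 h2.
case=> q; rewrite inE => /andP [h1 h2] ->; by rewrite inE /= sy h1 h2.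
Qed.

Lemma tree_to_stree N (T : rel 'I_N) : is_tree T -> stree T setT.
Proof.
case=> [[ir sy] [cn ne]]; split=> //.
  move=> x y _ _; apply: (connect_homo (h := id)) (cn x y) => u w uw.
  by rewrite /adjS !in_setT.
rewrite /esum cardsT card_ord.
have -> : \sum_(x in [set: 'I_N]) deg T [set: 'I_N] x = \sum_x #|[set j | T x j]|.
  apply: eq_big => x; first by rewrite in_setT.
  move=> _; apply: eq_card => y; by rewrite !inE.
rewrite -nedges2 // ne; lia.
Qed.

Lemma stree_to_tree (V : finType) (r : rel V) (S : {set V}) m (phi : 'I_m -> V) :
  stree r S -> injective phi -> S = [set phi i | i in setT] ->
  is_tree (fun i j => r (phi i) (phi j)).
Proof.
case=> sy ir cn es injp eS.
have inS i : phi i \in S by rewrite eS; apply: imset_f; rewrite in_setT.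
split; first by split=> [i|i j]; [exact: ir | exact: sy].
split.
  move=> i j.
  pose psi := fun x => odflt i [pick k | phi k == x].
  have psiK k : psi (phi k) = k.
    rewrite /psi; case: pickP => [k' /eqP /injp -> //|none].
    by have := none k; rewrite eqxx.
  rewrite -(psiK i) -(psiK j).
  apply: (connect_homo_in (P := fun x => x \in S) (h := psi)) (cn _ _ (inS i) (inS j)) => //.
  move=> u w uS /and3P [_ wS uw]; split=> //.
  move: uS wS uw; rewrite eS => /imsetP [a _ ->] /imsetP [b _ ->] uw.
  by rewrite /= !psiK.
have cS : #|S| = m by rewrite eS card_imset // cardsT card_ord.
have : 2 * n_edges (fun i j => r (phi i) (phi j)) = 2 * (m - 1).
  rewrite nedges2 //.
  have -> : 2 * (m - 1) = esum r S by rewrite es cS.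
  rewrite /esum [in RHS]eS big_imset /=; last by move=> a b _ _; apply: injp.
  apply: eq_big => i; first by rewrite in_setT.
  move=> _; rewrite /deg -eS.
  rewrite -(card_imset _ injp); apply: eq_card => y; rewrite !inE.
  apply/imsetP/andP => [[k] |[yS ry]].
    by rewrite inE => rk ->; rewrite inS.
  move: yS; rewrite eS => /imsetP [k _ e]; exists k => //; by rewrite inE -e.
lia.
Qed.

Lemma set_enum (V : finType) (S : {set V}) m : #|S| = m ->
  exists phi : 'I_m -> V, injective phi /\ S = [set phi i | i in setT].
Proof.
move=> hS; subst m.
exists (fun i => enum_val (A := S) i); split; first exact: enum_val_inj.
apply/setP => x; apply/idP/imsetP => [xS|[i _ ->]]; last exact: enum_valP.
by exists (enum_rank_in xS x); rewrite ?in_setT ?enum_rankK_in.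
Qed.

Lemma prime_cop p k : prime p -> 0 < k < p -> coprime p k.
Proof.
move=> pp /andP [k0 kp]; rewrite prime_coprime //; apply/negP => /(dvdn_leq k0); lia.
Qed.

Lemma key N m (T : rel 'I_N) (R : {set 'I_N}) (h : 'I_N -> 'I_N) :
  is_tree T -> tree_complete (SP m) -> 0 < m -> #|~: R| = m ->
  {in R &, injective h} -> (forall x, x \in R -> m <= h x) ->
  (forall x y, x \in R -> y \in R -> T x y -> coprime (h x).+1 (h y).+1) ->
  (forall x y, x \in R -> y \notin R -> T x y -> h x = m :> nat) -> prime m.+1 ->
  subgraph_embeds T (SP N).
Proof.
move=> hT tc m0 hS hinj hm hRR hRS pm.
have st := tree_to_stree hT.
have [[ir sy] _] := hT.
have [r' [st' sub']] := forestR st R.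
have eS : [set: 'I_N] :\: R = ~: R by rewrite setTD.
rewrite eS in st' sub'.
have [phi [pinj ephi]] := set_enum hS.
have tT' := stree_to_tree st' pinj ephi.
have [g [ginj gE]] := tc _ tT'.
have hmN : m <= N by rewrite -hS; have := max_card (~: R); rewrite card_ord.
pose psi := fun x => odflt (Ordinal m0) [pick k | phi k == x].
have psiK k : psi (phi k) = k.
  rewrite /psi; case: pickP => [k' /eqP /pinj -> //|none].
  by have := none k; rewrite eqxx.
have phiK x : x \notin R -> phi (psi x) = x.
  move=> xR; have : x \in ~: R by rewrite inE.
  by rewrite ephi => /imsetP [k _ ->]; rewrite psiK.
pose f := fun x => if x \in R then h x else widen_ord hmN (g (psi x)).
have fR x : x \in R -> f x = h x by rewrite /f => ->.
have fS x : x \notin R -> val (f x) = val (g (psi x)) by rewrite /f => /negbTE ->.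
have finj : injective f.
  move=> x y; case: (boolP (x \in R)) => xR; case: (boolP (y \in R)) => yR.
  - by rewrite !fR //; apply: hinj.
  - move=> e; have := hm _ xR; have := ltn_ord (g (psi y)).
    by rewrite -fS // -e fR // /=; lia.
  - move=> e; have := hm _ yR; have := ltn_ord (g (psi x)).
    by rewrite -fS // e fR // /=; lia.
  - move/(congr1 val); rewrite !fS // => /val_inj /ginj e.
    by rewrite -(phiK x) // -(phiK y) // e.
exists f; split=> // x y Txy.
have neq : f x != f y.
  by apply/eqP => /finj e; rewrite e ir in Txy.
rewrite /SP neq /=.
case: (boolP (x \in R)) => xR; case: (boolP (y \in R)) => yR.
- by rewrite !fR //; apply: hRR.
- rewrite fR // (hRS x y) // fS //; apply: prime_cop => //; rewrite /=; have := ltn_ord (g (psi y)); lia.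
- rewrite coprime_sym fR // (hRS y x) // ?fS //; first (apply: prime_cop => //; rewrite /=; have := ltn_ord (g (psi x)); lia).
  by rewrite sy.
- rewrite !fS //.
  have : r' (phi (psi x)) (phi (psi y)) by rewrite !phiK //; apply: sub' => //; rewrite inE.
  move/(gE (psi x) (psi y)).
  by rewrite /SP => /andP [_].
Qed.

Lemma key2 N m (T : rel 'I_N) (R : {set 'I_N}) (hv : 'I_N -> nat) :
  is_tree T -> tree_complete (SP m) -> 0 < m -> #|~: R| = m ->
  {in R &, injective hv} -> (forall x, x \in R -> m <= hv x < N) ->
  (forall x y, x \in R -> y \in R -> T x y -> coprime (hv x).+1 (hv y).+1) ->
  (forall x y, x \in R -> y \notin R -> T x y -> hv x = m) -> prime m.+1 ->
  subgraph_embeds T (SP N).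
Proof.
move=> hT tc m0 hS hinj hr hRR hRS pm.
have N0 : 0 < N by have := max_card (~: R); rewrite card_ord; lia.
pose h := fun z => insubd (Ordinal N0) (hv z) : 'I_N.
have hE z : z \in R -> val (h z) = hv z.
  by move=> zR; rewrite /h val_insubd; have := hr z zR; case/andP => _ ->.
apply: (key hT tc m0 hS (h := h)) => //.
- by move=> a b aR bR /(congr1 val); rewrite !hE // => /hinj; apply.
- by move=> x xR; rewrite hE //; case/andP: (hr x xR).
- by move=> x y xR yR Txy; rewrite !hE //; apply: hRR.
- by move=> x y xR yR Txy; rewrite hE //; apply: (hRS x y).
Qed.

Lemma step1 m : tree_complete (SP m) -> prime m.+1 -> 0 < m -> tree_complete (SP (m + 1)).
Proof.
move=> tc pm m0 T hT.
have [[ir sy] _] := hT.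
have h01 : 0 < m + 1 by rewrite addn1.
pose v0 := Ordinal h01.
apply: (key2 hT tc m0 (R := [set v0]) (hv := fun _ => m)) => //.
- have := cardsC [set v0]; rewrite cards1 card_ord => e; apply/eqP; by rewrite -(eqn_add2l 1) e addnC.
- by move=> a b; rewrite !inE => /eqP -> /eqP ->.
- by move=> x _; rewrite leqnn; lia.
- by move=> x y; rewrite !inE => /eqP -> /eqP ->; rewrite ir.
Qed.

Lemma step2 m : tree_complete (SP m) -> prime m.+1 -> 0 < m -> tree_complete (SP (m + 2)).
Proof.
move=> tc pm m0 T hT.
have [[ir sy] _] := hT.
have st := tree_to_stree hT.
have N2 : 2 <= #|[set: 'I_(m + 2)]| by rewrite cardsT card_ord; lia.
have h01 : 0 < m + 2 by rewrite addn2.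
pose v0 := Ordinal h01.
have [l [_ _ dl]] := leaf_exists st N2 (in_setT v0).
have : 0 < deg T setT l by rewrite dl.
case/card_gt0P => x; rewrite inE => /andP [_ lx].
have xl : x != l by apply: contraTneq lx => ->; rewrite ir.
have onlyx : forall z, T l z -> z = x.
  by move=> z lz; apply: (leaf_uniq dl); rewrite ?in_setT.
apply: (key2 hT tc m0 (R := [set x; l]) (hv := fun z => if z == l then m.+1 else m)) => //.
- have := cardsC [set x; l]; rewrite cards2 xl card_ord /= => e; apply/eqP; by rewrite -(eqn_add2l 2) e addnC.
- move=> a b; rewrite !inE => /orP [] /eqP -> /orP [] /eqP ->; rewrite ?eqxx ?(negbTE xl) //; lia.
- move=> a; rewrite !inE => /orP [] /eqP ->; rewrite ?eqxx ?(negbTE xl); lia.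
- move=> a b; rewrite !inE => /orP [] /eqP -> /orP [] /eqP ->; rewrite ?eqxx ?(negbTE xl) ?ir //.
  + by move=> _; apply: coprimenS.
  + by move=> _; apply: coprimeSn.
- move=> a b; rewrite !inE => /orP [] /eqP ->; first by rewrite (negbTE xl).
  by move=> bR /onlyx bx; move: bR; rewrite bx eqxx.
Qed.

Lemma cop3 m a b : prime m.+1 -> 2 <= m -> a != b -> m <= a <= m.+2 -> m <= b <= m.+2 ->
  coprime a.+1 b.+1.
Proof.
move=> pm m2 ab ha hb.
have c13 : coprime m.+1 m.+3.
  rewrite prime_coprime // (_ : m.+3 = m.+1 + 2); last by lia.
  rewrite dvdn_addr ?dvdnn //.
  by apply/negP => /(dvdn_leq (isT : 0 < 2)); lia.
have : (a == m) || (a == m.+1) || (a == m.+2) by lia.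
have : (b == m) || (b == m.+1) || (b == m.+2) by lia.
move: ab => /eqP ab.
move=> /orP [/orP [] | ] /eqP eb /orP [/orP [] | ] /eqP ea; subst a b; try (exfalso; lia);
  rewrite ?coprimenS ?coprimeSn //; rewrite coprime_sym //.
Qed.

Lemma in3 (V : finType) (a b c u : V) :
  u \in [set a; b; c] -> [\/ u = a, u = b | u = c].
Proof. by rewrite !inE => /orP [/orP [] | ] /eqP ->; [constructor 1 | constructor 2 | constructor 3]. Qed.

Lemma tri N m (T : rel 'I_N) (a b c : 'I_N) :
  is_tree T -> tree_complete (SP m) -> prime m.+1 -> 2 <= m -> N = m + 3 ->
  a != b -> a != c -> b != c ->
  (forall z, T b z -> z \in [set a; b; c]) -> (forall z, T c z -> z \in [set a; b; c]) ->
  subgraph_embeds T (SP N).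
Proof.
move=> hT tc pm m2 hN ab ac bc hb hc.
have [[ir sy] _] := hT.
have m0 : 0 < m by lia.
pose hv := fun z => if z == c then m.+2 else if z == b then m.+1 else m.
have hinj : {in [set a; b; c] &, injective hv}.
  have ba : b != a by rewrite eq_sym.
  have ca : c != a by rewrite eq_sym.
  have cb : c != b by rewrite eq_sym.
  move=> u v /in3 [] -> /in3 [] ->;
  rewrite /hv ?eqxx ?(negbTE ab) ?(negbTE ac) ?(negbTE bc) ?(negbTE ba) ?(negbTE ca) ?(negbTE cb) //; lia.
have hr : forall u, u \in [set a; b; c] -> m <= hv u <= m.+2.
  have ba : b != a by rewrite eq_sym.
  have ca : c != a by rewrite eq_sym.
  move=> u /in3 [] ->; rewrite /hv ?eqxx ?(negbTE ab) ?(negbTE ac) ?(negbTE bc) ?(negbTE ba) ?(negbTE ca); lia.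
apply: (key2 hT tc m0 (R := [set a; b; c]) (hv := hv)) => //.
- have c3 : #|[set a; b; c]| = 3.
    by rewrite -setUA cardsU1 !inE (negbTE ab) (negbTE ac) /= cards2 bc.
  have := cardsC [set a; b; c]; rewrite c3 card_ord => e; apply/eqP.
  rewrite -(eqn_add2l 3) e; apply/eqP; lia.
- move=> u uR; have := hr u uR; lia.
- move=> u v uR vR Tuv; apply: (cop3 pm m2); [|exact: hr|exact: hr].
  apply/eqP => /(hinj _ _ uR vR) e; by rewrite e ir in Tuv.
- move=> u v /in3 [] -> vR Tuv.
  + by rewrite /hv (negbTE ab) (negbTE ac).
  + by move: vR; rewrite (hb _ Tuv).
  + by move: vR; rewrite (hc _ Tuv).
Qed.

Lemma step3 m : tree_complete (SP m) -> prime m.+1 -> 2 <= m -> tree_complete (SP (m + 3)).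
Proof.
move=> tc pm m2 T hT.
have [[ir sy] _] := hT.
have st := tree_to_stree hT.
have N3 : 3 <= #|[set: 'I_(m + 3)]| by rewrite cardsT card_ord; lia.
have [y [x [_ _ dy yx H]]] := dichot st N3.
have onlyx z : T y z -> z = x by move=> yz; apply: (leaf_uniq dy); rewrite ?in_setT.
have xy : x != y by apply: contraTneq yx => ->; rewrite ir.
have inR (a b c : 'I_(m + 3)) : [/\ a \in [set a; b; c], b \in [set a; b; c] & c \in [set a; b; c]].
  by rewrite !inE !eqxx !orbT.
case: H => [dx | [y' [_ y'y dy' y'x]]].
- have yn : y \in nbrs T setT x by rewrite inE in_setT sy.
  have := cardsD1 y (nbrs T setT x); rewrite yn -/(deg T setT x) dx => e.
  have /cards1P [w hw] : #|nbrs T setT x :\ y| == 1 by rewrite -(eqn_add2l 1) -e.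
  have : w \in nbrs T setT x :\ y by rewrite hw set11.
  rewrite !inE => /andP [wy xw].
  have wx : w != x by apply: contraTneq xw => ->; rewrite ir.
  have onlyxw z : T x z -> z = y \/ z = w.
    move=> xz; case: (eqVneq z y) => [->|zy]; first by left.
    have : z \in nbrs T setT x :\ y by rewrite !inE zy xz.
    by rewrite hw inE => /eqP ->; right.
  have [i1 i2 i3] := inR w x y.
  apply: (tri hT tc pm m2 erefl wx wy xy).
    by move=> z /onlyxw [] ->.
  by move=> z /onlyx ->.
- have xy' : x != y' by apply: contraTneq y'x => ->; rewrite ir.
  have yy' : y != y' by rewrite eq_sym.
  have onlyx' z : T y' z -> z = x by move=> yz; apply: (leaf_uniq dy'); rewrite ?in_setT.
  have [i1 i2 i3] := inR x y y'.
  apply: (tri hT tc pm m2 erefl xy xy' yy').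
    by move=> z /onlyx ->.
  by move=> z /onlyx' ->.
Qed.

Theorem corollary9p6 (n : nat) :
  1 <= n -> tree_complete (SP n) -> prime n.+1 ->
  (tree_complete (SP (n + 1)) /\ tree_complete (SP (n + 2))) /\
  (prime (n + 3) ->
     [/\ tree_complete (SP (n + 1)), tree_complete (SP (n + 2)),
         tree_complete (SP (n + 3)), tree_complete (SP (n + 4))
       & tree_complete (SP (n + 5))]).
Proof.
move=> n1 tc pn.
have t1 := step1 tc pn n1.
have t2 := step2 tc pn n1.
split=> // p3.
have p3' : prime (n + 2).+1 by rewrite -addnS.
have n2 : 0 < n + 2 by lia.
have n2' : 2 <= n + 2 by lia.
split=> //.
- by have := step1 t2 p3' n2; rewrite -addnA.
- by have := step2 t2 p3' n2; rewrite -addnA.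
- by have := step3 t2 p3' n2'; rewrite -addnA.
Qed.
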